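(* Let $p>2$ be a prime and let $a,b\in\mathbb{C}_p$ with $a\neq0$, $b\neq0$, $a\neq b$, $|2a|_p=|b|_p$ and $|2a-b|_p<|a|_p$. Let $P=-\frac1b$, $D=\mathbb{C}_p\setminus\{P\}$, $f(x)=\frac{ax^2}{bx+1}$ on $D$, $x_1=0$, $x_2=\frac1{a-b}$, and $r_0=\frac{1}{|b|_p}$. Then $x_1$ and $x_2$ are attracting fixed points of $f$, and $$A(x_1)=B_{r_0}(x_1),\qquad A(x_2)=B_{r_0}(x_2).$$
   Context: $\mathbb{C}_p$ is the field of complex $p$-adic numbers with $p$-adic norm $|\cdot|_p$. For $c\in\mathbb{C}_p$, $r>0$: $B_r(c)=\{x:|x-c|_p<r\}$. For $y\in D$, $y^{(n)}=f^n(y)$ is the $n$-th iterate (defined as long as no earlier iterate equals $P$). A fixed point $x^{(0)}$ of $f$ is attracting if $|f'(x^{(0)})|_p<1$. Its basin of attraction is $A(x^{(0)})=\{y: y^{(n)}\text{ defined for all }n,\ y^{(n)}\to x^{(0)}\}$. *)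

(* Defs.v *)
From HB Require Import structures.
From mathcomp Require Import all_boot all_order all_algebra.
From mathcomp Require Import reals.
Set Implicit Arguments. Unset Strict Implicit. Unset Printing Implicit Defensive.
Import Order.TTheory GRing.Theory Num.Theory.
Local Open Scope ring_scope.

Definition algebraic_over_Q (K : closedFieldType) (y : K) : Prop :=
  exists q : {poly rat}, q != 0 /\ root (map_poly ratr q) y.

(* (K, abs) is (a model of) the field C_p of complex p-adic numbers with
   its p-adic norm: an algebraically closed field of characteristic 0 with
   a non-archimedean absolute value normalised by |p| = 1/p, complete, and
   in which the algebraic numbers are dense (so K is the completion of an
   algebraic closure of Q_p). *)
Arguments algebraic_over_Q : clear implicits.
Record is_Cp (p : nat) (K : closedFieldType) (R : realType) (abs : K -> R) : Prop := {
  Cp_char0 : [pchar K] =i pred0;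
  Cp_abs_ge0 : forall x, 0 <= abs x;
  Cp_abs_eq0 : forall x, (abs x == 0) = (x == 0);
  Cp_absM : forall x y, abs (x * y) = abs x * abs y;
  Cp_abs_ultra : forall x y, abs (x + y) <= Num.max (abs x) (abs y);
  Cp_abs_p : abs (p%:R) = (p%:R)^-1;
  Cp_complete : forall u : nat -> K,
    (forall eps : R, 0 < eps -> exists N, forall m n, (N <= m)%N -> (N <= n)%N ->
        abs (u m - u n) < eps) ->
    exists l, forall eps : R, 0 < eps -> exists N, forall n, (N <= n)%N -> abs (u n - l) < eps;
  Cp_dense : forall (x : K) (eps : R), 0 < eps ->
    exists y, algebraic_over_Q K y /\ abs (x - y) < eps
}.

Section Dyn.
Variables (K : fieldType) (R : realFieldType) (abs : K -> R).

Definition ball_p (c : K) (r : R) (x : K) : Prop := abs (x - c) < r.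

Definition has_deriv (f : K -> K) (x d : K) : Prop :=
  forall eps : R, 0 < eps -> exists delta : R, 0 < delta /\
    forall h : K, h != 0 -> abs h < delta -> abs ((f (x + h) - f x) / h - d) < eps.

(* f is a map on D = K \ {P}; attracting fixed point in D *)
Definition attracting_fixed_point (f : K -> K) (P x0 : K) : Prop :=
  x0 != P /\ f x0 = x0 /\ exists d, has_deriv f x0 d /\ abs d < 1.

(* basin of attraction: all iterates defined (no iterate hits P) and
   converge to x0 *)
Definition basin (f : K -> K) (P x0 : K) (y : K) : Prop :=
  (forall n, iter n f y != P) /\
  (forall eps : R, 0 < eps -> exists N, forall n, (N <= n)%N -> abs (iter n f y - x0) < eps).
End Dyn.
Arguments is_Cp : clear implicits.
Arguments attracting_fixed_point : clear implicits.
Arguments basin : clear implicits.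
Arguments ball_p : clear implicits.

(* Main.v *)
Require Import Defs.
From HB Require Import structures.
From mathcomp Require Import all_boot all_order all_algebra.
From mathcomp Require Import reals.
From mathcomp Require Import ring lra.
Import Order.TTheory GRing.Theory Num.Theory.
Local Open Scope ring_scope.

Lemma geom_small (R : realType) (q eps : R) : 0 <= q -> q < 1 -> 0 < eps ->
  exists N : nat, q ^+ N < eps.
Proof.
move=> q0 q1 e0.
have [->|qn0] := eqVneq q 0; first by exists 1%N; rewrite expr1.
have qp : 0 < q by rewrite lt_def qn0 q0.
set d := q^-1 - 1.
have dp : 0 < d by rewrite /d subr_gt0 invf_gt1.
have bern : forall n : nat, 1 + n%:R * d <= (1 + d) ^+ n.
  elim=> [|n IH]; first by rewrite expr0 mul0r addr0.
  rewrite exprS -natr1.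
  have h0 : 0 <= n%:R * d by rewrite mulr_ge0 // ltW.
  nra.
have x0 : 0 <= (eps * d)^-1 by rewrite invr_ge0 mulr_ge0 // ltW.
have := archi_boundP x0; set N := Num.Def.archi_bound _ => HN.
exists N.
have e1 : 1 + d = q^-1 by rewrite /d addrC subrK.
have := bern N; rewrite e1 exprVn => hb.
have hq : 0 < q ^+ N by rewrite exprn_gt0.
have : eps^-1 < (q ^+ N)^-1.
  suff : eps^-1 < 1 + N%:R * d by move=> h; exact: (lt_le_trans h hb).
  have : (eps * d)^-1 * d < N%:R * d by rewrite ltr_pM2r.
  rewrite invfM -mulrA mulVf ?gt_eqF // mulr1 => h. lra.
rewrite ltf_pV2 ?posrE //.
Qed.


Lemma abs1 {p : nat} {K : closedFieldType} {R : realType} {abs : K -> R} (HK : is_Cp p K R abs) : abs 1 = 1.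
Proof.
have h := Cp_absM HK 1 1; rewrite mulr1 in h.
have h0 : abs 1 != 0 by rewrite (Cp_abs_eq0 HK) oner_eq0.
by apply/(mulIf h0); rewrite mul1r.
Qed.

Lemma absN {p : nat} {K : closedFieldType} {R : realType} {abs : K -> R} (HK : is_Cp p K R abs) x :
  abs (- x) = abs x.
Proof.
have h := Cp_absM HK (-1) (-1); rewrite mulrNN mulr1 (abs1 HK) in h.
have g := Cp_abs_ge0 HK (-1).
have e : abs (-1) = 1 by nra.
by rewrite -mulN1r (Cp_absM HK) e mul1r.
Qed.

Lemma absB {p : nat} {K : closedFieldType} {R : realType} {abs : K -> R} (HK : is_Cp p K R abs) x y :
  abs (x - y) = abs (y - x).
Proof. by rewrite -(absN HK) opprB. Qed.

Lemma absV {p : nat} {K : closedFieldType} {R : realType} {abs : K -> R} (HK : is_Cp p K R abs) x :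
  abs (x^-1) = (abs x)^-1.
Proof.
have [->|xn0] := eqVneq x 0.
  by rewrite invr0; have := Cp_abs_eq0 HK 0; rewrite eqxx => /eqP ->; rewrite invr0.
have h := Cp_absM HK x x^-1; rewrite mulfV // (abs1 HK) in h.
have hx : abs x != 0 by rewrite (Cp_abs_eq0 HK).
by apply/(mulfI hx); rewrite -h mulfV.
Qed.

Lemma absM {p : nat} {K : closedFieldType} {R : realType} {abs : K -> R} (HK : is_Cp p K R abs) x y :
  abs (x * y) = abs x * abs y.
Proof. exact: (Cp_absM HK). Qed.

Lemma abs_gt0 {p : nat} {K : closedFieldType} {R : realType} {abs : K -> R} (HK : is_Cp p K R abs) x :
  (0 < abs x) = (x != 0).
Proof. by rewrite lt_def (Cp_abs_eq0 HK) (Cp_abs_ge0 HK) andbT. Qed.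

Lemma absD_le {p : nat} {K : closedFieldType} {R : realType} {abs : K -> R} (HK : is_Cp p K R abs) x y r :
  abs x <= r -> abs y <= r -> abs (x + y) <= r.
Proof.
move=> hx hy; apply: le_trans (Cp_abs_ultra HK x y) _.
by rewrite ge_max hx hy.
Qed.

Lemma absD_lt {p : nat} {K : closedFieldType} {R : realType} {abs : K -> R} (HK : is_Cp p K R abs) x y r :
  abs x < r -> abs y < r -> abs (x + y) < r.
Proof.
move=> hx hy; apply: le_lt_trans (Cp_abs_ultra HK x y) _.
by rewrite gt_max hx hy.
Qed.

Lemma absD_dom {p : nat} {K : closedFieldType} {R : realType} {abs : K -> R} (HK : is_Cp p K R abs) x y :
  abs y < abs x -> abs (x + y) = abs x.
Proof.
move=> hyx; apply/eqP; rewrite eq_le; apply/andP; split.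
  by apply: absD_le HK _ _ _ (lexx _) (ltW hyx).
have e : x = (x + y) + (- y) by rewrite addrK.
have := Cp_abs_ultra HK (x + y) (- y); rewrite -e (absN HK).
rewrite le_max => /orP [//|h]; by move: (lt_le_trans hyx h); rewrite ltxx.
Qed.

Lemma abs0 {p : nat} {K : closedFieldType} {R : realType} {abs : K -> R} (HK : is_Cp p K R abs) :
  abs 0 = 0.
Proof. by apply/eqP; rewrite (Cp_abs_eq0 HK). Qed.

Lemma abs_natr {p : nat} {K : closedFieldType} {R : realType} {abs : K -> R} (HK : is_Cp p K R abs) n :
  abs (n%:R) <= 1.
Proof.
elim: n => [|n IH]; first by rewrite (abs0 HK).
by rewrite -natr1; apply: (absD_le HK) IH _; rewrite (abs1 HK).
Qed.

Lemma abs2 {p : nat} {K : closedFieldType} {R : realType} {abs : K -> R} (HK : is_Cp p K R abs) :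
  prime p -> (2 < p)%N -> abs 2 = 1.
Proof.
move=> pp p2.
have op : odd p by case: (even_prime pp) => // e; rewrite e in p2.
have h2 := abs_natr HK 2.
apply/eqP; rewrite eq_le h2 /=; rewrite leNgt; apply/negP => hlt.
have ep : p = (p./2).*2 + 1 by rewrite -[in LHS](odd_double_half p) op addnC.
have hp1 : abs (p%:R) < 1.
  rewrite (Cp_abs_p HK) invf_lt1 ?ltr0n ?ltr1n //; first exact: prime_gt1.
  by apply: ltn_trans p2.
have e1 : (1 : K) = p%:R + - (2 * (p./2)%:R).
  by rewrite {1}ep natrD -muln2 natrM mulrC addrAC subrr add0r.
have : abs (1 : K) < 1.
  rewrite e1; apply: (absD_lt HK) hp1 _.
  rewrite (absN HK) (absM HK).
  have := abs_natr HK (p./2); have := Cp_abs_ge0 HK (p./2)%:R; have := Cp_abs_ge0 HK 2.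
  nra.
by rewrite (abs1 HK) ltxx.
Qed.

Lemma iter_bound {p : nat} {K : closedFieldType} {R : realType} {abs : K -> R} (HK : is_Cp p K R abs)
  (f : K -> K) (P x0 y : K) (s q : R) :
  0 <= q -> q <= 1 -> abs (y - x0) <= s ->
  (forall x, abs (x - x0) <= s -> x != P /\ abs (f x - x0) <= q * abs (x - x0)) ->
  forall n, iter n f y != P /\ abs (iter n f y - x0) <= q ^+ n * s.
Proof.
move=> q0 q1 hy hf.
have s0 : 0 <= s by apply: le_trans hy; exact: Cp_abs_ge0 HK _.
have key : forall n, abs (iter n f y - x0) <= q ^+ n * s.
  elim=> [|n IH]; first by rewrite expr0 mul1r.
  have hn : abs (iter n f y - x0) <= s.
    apply: le_trans IH _; rewrite ler_piMl // exprn_ile1 //.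
  have [_ h] := hf _ hn.
  rewrite iterS; apply: le_trans h _.
  by rewrite exprS -mulrA ler_wpM2l.
move=> n; split; last exact: key.
have hn : abs (iter n f y - x0) <= s.
  apply: le_trans (key n) _; rewrite ler_piMl // exprn_ile1 //.
by have [] := hf _ hn.
Qed.

Lemma basin_of_contr {p : nat} {K : closedFieldType} {R : realType} {abs : K -> R} (HK : is_Cp p K R abs)
  (f : K -> K) (P x0 y : K) (s q : R) :
  0 <= q -> q < 1 -> abs (y - x0) <= s ->
  (forall x, abs (x - x0) <= s -> x != P /\ abs (f x - x0) <= q * abs (x - x0)) ->
  basin K R abs f P x0 y.
Proof.
move=> q0 q1 hy hf.
have hb := iter_bound HK f P x0 y s q q0 (ltW q1) hy hf.
split; first by move=> n; case: (hb n).
move=> eps e0.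
have s0 : 0 <= s by apply: le_trans hy; exact: Cp_abs_ge0 HK _.
have [N HN] := @geom_small R q _ q0 q1 (divr_gt0 e0 (ltr_pwDr ltr01 s0)).
exists N => n hn; have [_ h] := hb n.
apply: le_lt_trans h _.
have h1 : q ^+ n <= q ^+ N by rewrite ler_wiXn2l // ltW.
have h2 : 0 <= q ^+ n by rewrite exprn_ge0.
have h3 : q ^+ N * (1 + s) < eps.
  have hs1 : 0 < 1 + s by lra.
  by move: HN; rewrite ltr_pdivlMr ?(addrC 1) //; lra.
nra.
Qed.

Lemma basin_escape {p : nat} {K : closedFieldType} {R : realType} {abs : K -> R} (HK : is_Cp p K R abs)
  (f : K -> K) (P x0 y : K) (r : R) :
  0 < r ->
  (forall x, x != P -> r <= abs (x - x0) -> r <= abs (f x - x0)) ->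
  basin K R abs f P x0 y -> abs (y - x0) < r.
Proof.
move=> r0 hf [hP hc]; rewrite ltNge; apply/negP => hy.
have all : forall n, r <= abs (iter n f y - x0).
  by elim=> [//|n IH]; rewrite iterS; apply: hf.
have [N HN] := hc r r0.
by have := HN N (leqnn N); rewrite ltNge all.
Qed.

Lemma deriv_f {p : nat} {K : closedFieldType} {R : realType} {abs : K -> R} (HK : is_Cp p K R abs)
  (a b x0 : K) : a != 0 -> b != 0 -> b * x0 + 1 != 0 ->
  has_deriv abs (fun x => a * x ^+ 2 / (b * x + 1)) x0
    (a * (b * x0 ^+ 2 + 2 * x0) / (b * x0 + 1) ^+ 2).
Proof.
move=> ha hb hw eps e0.
set u := abs (b * x0 + 1).
have u0 : 0 < u by rewrite (abs_gt0 HK).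
have a0 : 0 < abs a by rewrite (abs_gt0 HK).
have b0 : 0 < abs b by rewrite (abs_gt0 HK).
exists (Num.min (u / abs b) (eps * u ^+ 3 / abs a)); split.
  by rewrite lt_min !divr_gt0 ?mulr_gt0 ?exprn_gt0.
move=> h hn0; rewrite lt_min => /andP [hh1 hh2].
have hbh : abs (b * h) < u.
  by rewrite (absM HK) mulrC -ltr_pdivlMr.
have ew : abs (b * (x0 + h) + 1) = u.
  have -> : b * (x0 + h) + 1 = (b * x0 + 1) + b * h by ring.
  exact: (absD_dom HK).
have hw' : b * (x0 + h) + 1 != 0 by rewrite -(abs_gt0 HK) ew.
have -> : (a * (x0 + h) ^+ 2 / (b * (x0 + h) + 1) - a * x0 ^+ 2 / (b * x0 + 1)) / h
   - a * (b * x0 ^+ 2 + 2 * x0) / (b * x0 + 1) ^+ 2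
   = a * h / ((b * (x0 + h) + 1) * (b * x0 + 1) ^+ 2).
  by field; rewrite hn0 hw hw'.
rewrite !(absM HK) (absV HK) !(absM HK) ew -/u.
have hu3 : 0 < u * (u * u) by rewrite !mulr_gt0.
rewrite ltr_pdivrMr //.
move: hh2; rewrite ltr_pdivlMr //.
have -> : u ^+ 3 = u * (u * u) by rewrite !exprS expr0 mulr1.
by rewrite mulrC.
Qed.

Lemma nonP {p : nat} {K : closedFieldType} {R : realType} {abs : K -> R} (HK : is_Cp p K R abs)
  (b x : K) : b != 0 -> (x != - b^-1) = (b * x + 1 != 0).
Proof.
move=> hb; apply/idP/idP; apply: contra => /eqP e; apply/eqP.
  have -> : x = b^-1 * ((b * x + 1) - 1) by rewrite addrK mulKf.
  by rewrite e sub0r mulrN1.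
by rewrite e mulrN mulfV // addNr.
Qed.

Lemma x1_contr {p : nat} {K : closedFieldType} {R : realType} {abs : K -> R} (HK : is_Cp p K R abs)
  (a b : K) (eab : abs a = abs b) (hb : b != 0) (s : R) (hs : abs b * s < 1) (x : K) :
  abs (x - 0) <= s -> x != - b^-1 /\
    abs (a * x ^+ 2 / (b * x + 1) - 0) <= (abs b * s) * abs (x - 0).
Proof.
rewrite !subr0 => hx.
have b0 : 0 < abs b by rewrite (abs_gt0 HK).
have x0 := Cp_abs_ge0 HK x.
have hbx : abs (b * x) < 1 by rewrite (absM HK); nra.
have e1 : abs (b * x + 1) = 1 by rewrite addrC (absD_dom HK) (abs1 HK).
split; first by rewrite (nonP HK b x hb) -(abs_gt0 HK) e1.
rewrite !(absM HK) (absV HK) e1 invr1 mulr1 eab.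
have hsx : 0 <= s - abs x by rewrite subr_ge0.
have := mulr_ge0 (mulr_ge0 (ltW b0) x0) hsx.
nra.
Qed.

Lemma x1_escape {p : nat} {K : closedFieldType} {R : realType} {abs : K -> R} (HK : is_Cp p K R abs)
  (a b : K) (eab : abs a = abs b) (hb : b != 0) (x : K) :
  x != - b^-1 -> (abs b)^-1 <= abs (x - 0) -> (abs b)^-1 <= abs (a * x ^+ 2 / (b * x + 1) - 0).
Proof.
rewrite !subr0 (nonP HK b x hb) => hw hx.
have b0 : 0 < abs b by rewrite (abs_gt0 HK).
have T1 : 1 <= abs b * abs x by have := ler_wpM2l (ltW b0) hx; rewrite mulfV ?gt_eqF.
have hw0 : 0 < abs (b * x + 1) by rewrite (abs_gt0 HK).
have hle : abs (b * x + 1) <= abs b * abs x.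
  apply: (absD_le HK); first by rewrite (absM HK).
  by rewrite (abs1 HK).
apply: le_trans hx _.
rewrite !(absM HK) (absV HK) eab.
rewrite ler_pdivlMr //.
have x0 := Cp_abs_ge0 HK x.
nra.
Qed.

Lemma abs_amb {p : nat} {K : closedFieldType} {R : realType} {abs : K -> R} (HK : is_Cp p K R abs)
  (a b : K) (hl : abs (2 * a - b) < abs a) : abs (a - b) = abs a.
Proof.
have -> : a - b = - a + (2 * a - b) by ring.
by rewrite (absD_dom HK) (absN HK) // (absN HK).
Qed.

Lemma f_x2_id (K : closedFieldType) (a b x : K) : a != 0 -> a - b != 0 -> b * x + 1 != 0 ->
  a * x ^+ 2 / (b * x + 1) - (a - b)^-1
  = (x - (a - b)^-1) * ((2 * a - b) / (a - b) + (x - (a - b)^-1) * a) / (b * x + 1).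
Proof. move=> ha hab hw; field; by rewrite hab hw. Qed.

Lemma bx1_id (K : closedFieldType) (a b x : K) : a - b != 0 ->
  b * x + 1 = a / (a - b) + b * (x - (a - b)^-1).
Proof. move=> hab; field; by rewrite hab. Qed.

Lemma x2_contr {p : nat} {K : closedFieldType} {R : realType} {abs : K -> R} (HK : is_Cp p K R abs)
  (a b : K) (ha : a != 0) (hb : b != 0) (hab : a - b != 0) (eab : abs a = abs b)
  (hl : abs (2 * a - b) < abs a) (s : R) (hs : abs b * s < 1) (x : K) :
  abs (x - (a - b)^-1) <= s -> x != - b^-1 /\
    abs (a * x ^+ 2 / (b * x + 1) - (a - b)^-1)
      <= Num.max (abs (2 * a - b) / abs a) (abs b * s) * abs (x - (a - b)^-1).
Proof.
set h := x - (a - b)^-1 => hx.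
have b0 : 0 < abs b by rewrite (abs_gt0 HK).
have a0 : 0 < abs a by rewrite (abs_gt0 HK).
have h0 := Cp_abs_ge0 HK h.
have eamb := abs_amb HK a b hl.
have hbh : abs (b * h) < 1 by rewrite (absM HK); nra.
have eA : abs (a / (a - b)) = 1.
  by rewrite (absM HK) (absV HK (a - b)) eamb mulfV ?gt_eqF.
have e1 : abs (b * x + 1) = 1.
  by rewrite (bx1_id _ a b x hab) -/h (absD_dom HK) eA.
have hw : b * x + 1 != 0 by rewrite -(abs_gt0 HK) e1.
split; first by rewrite (nonP HK b x hb).
rewrite (f_x2_id _ a b x ha hab hw) -/h (absM HK) (absV HK) e1 invr1 mulr1 (absM HK) mulrC.
apply: ler_wpM2r => //.
apply: (absD_le HK).
  by rewrite (absM HK) (absV HK) eamb le_max lexx.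
rewrite (absM HK) eab le_max; apply/orP; right.
have hsx : 0 <= s - abs h by rewrite subr_ge0.
nra.
Qed.

Lemma x2_escape {p : nat} {K : closedFieldType} {R : realType} {abs : K -> R} (HK : is_Cp p K R abs)
  (a b : K) (ha : a != 0) (hb : b != 0) (hab : a - b != 0) (eab : abs a = abs b)
  (hl : abs (2 * a - b) < abs a) (x : K) :
  x != - b^-1 -> (abs b)^-1 <= abs (x - (a - b)^-1) ->
  (abs b)^-1 <= abs (a * x ^+ 2 / (b * x + 1) - (a - b)^-1).
Proof.
rewrite (nonP HK b x hb) => hw.
have e := f_x2_id _ a b x ha hab hw.
move: e; set h := x - (a - b)^-1 => e hx.
have b0 : 0 < abs b by rewrite (abs_gt0 HK).
have a0 : 0 < abs a by rewrite (abs_gt0 HK).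
have h0 := Cp_abs_ge0 HK h.
have eamb := abs_amb HK a b hl.
have T1 : 1 <= abs b * abs h by have := ler_wpM2l (ltW b0) hx; rewrite mulfV ?gt_eqF.
have hw0 : 0 < abs (b * x + 1) by rewrite (abs_gt0 HK).
have hle : abs (b * x + 1) <= abs b * abs h.
  rewrite (bx1_id _ a b x hab) -/h; apply: (absD_le HK).
    by rewrite (absM HK) (absV HK) eamb mulfV ?gt_eqF.
  by rewrite (absM HK).
have eha : abs (h * a) = abs b * abs h by rewrite (absM HK) eab mulrC.
have eL : abs ((2 * a - b) / (a - b)) < 1.
  rewrite (absM HK) (absV HK (a - b)) eamb.
  by rewrite ltr_pdivrMr ?mul1r.
have eT : abs ((2 * a - b) / (a - b) + h * a) = abs b * abs h.
  by rewrite addrC (absD_dom HK) eha //; apply: lt_le_trans eL T1.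
apply: le_trans hx _.
rewrite e (absM HK) (absV HK) (absM HK) eT ler_pdivlMr //.
nra.
Qed.

Theorem theorem3p9 (p : nat) (K : closedFieldType) (R : realType) (abs : K -> R)
  (HK : is_Cp p K R abs) (Hp : prime p) (Hp2 : (2 < p)%N)
  (a b : K) (ha : a != 0) (hb : b != 0) (hab : a != b)
  (h1 : abs (2 * a) = abs b) (h2 : abs (2 * a - b) < abs a) :
  let P := - b^-1 in
  let f := fun x : K => a * x ^+ 2 / (b * x + 1) in
  let x1 : K := 0 in
  let x2 : K := (a - b)^-1 in
  let r0 : R := (abs b)^-1 in
  attracting_fixed_point K R abs f P x1 /\ attracting_fixed_point K R abs f P x2 /\
  (forall y, basin K R abs f P x1 y <-> ball_p K R abs x1 r0 y) /\
  (forall y, basin K R abs f P x2 y <-> ball_p K R abs x2 r0 y).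
Proof.
move=> P f x1 x2 r0.
have eab : abs a = abs b by rewrite -h1 (absM HK) (abs2 HK Hp Hp2) mul1r.
have hab' : a - b != 0 by rewrite subr_eq0.
have b0 : 0 < abs b by rewrite (abs_gt0 HK).
have a0 : 0 < abs a by rewrite (abs_gt0 HK).
have r00 : 0 < r0 by rewrite /r0 invr_gt0.
have hlam : abs (2 * a - b) / abs a < 1 by rewrite ltr_pdivrMr ?mul1r.
have hlam0 : 0 <= abs (2 * a - b) / abs a by rewrite divr_ge0 // (Cp_abs_ge0 HK).
have sr0 : forall s, s < r0 -> abs b * s < 1.
  by move=> s; rewrite /r0 => hs; have := ltr_pM2l b0 s (abs b)^-1; rewrite mulfV ?gt_eqF // => ->.
split.
  split; first by rewrite /P /x1 (nonP HK b 0 hb) mulr0 add0r oner_eq0.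
  split; first by rewrite /f /x1 expr2 !mulr0 !mul0r.
  exists (a * (b * x1 ^+ 2 + 2 * x1) / (b * x1 + 1) ^+ 2); split.
    by apply: (deriv_f HK) => //; rewrite /x1 mulr0 add0r oner_eq0.
  by rewrite /x1 expr2 !mulr0 addr0 mulr0 mul0r (abs0 HK).
have hw2 : b * x2 + 1 != 0.
  have -> : b * x2 + 1 = a / (a - b) by rewrite /x2; field.
  by rewrite mulf_neq0 ?invr_eq0.
split.
  split; first by rewrite /P (nonP HK b x2 hb).
  split; first by rewrite /f /x2; field; rewrite hab' addrC subrK ha.
  exists (a * (b * x2 ^+ 2 + 2 * x2) / (b * x2 + 1) ^+ 2); split.
    exact: (deriv_f HK).
  have -> : a * (b * x2 ^+ 2 + 2 * x2) / (b * x2 + 1) ^+ 2 = (2 * a - b) / a.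
    by rewrite /x2; field; rewrite ha hab'.
  by rewrite (absM HK) (absV HK a).
split.
  move=> y; split.
    apply: (basin_escape HK f P x1 y r0 r00) => x hx hr.
    exact: (x1_escape HK a b eab hb x hx hr).
  rewrite /ball_p => hy.
  set s := abs (y - x1).
  apply: (basin_of_contr HK f P x1 y s (abs b * s)).
  - by rewrite mulr_ge0 ?(Cp_abs_ge0 HK) // ltW.
  - exact: sr0.
  - exact: lexx.
  - move=> x hx; exact: (x1_contr HK a b eab hb s (sr0 s hy) x hx).
move=> y; split.
  apply: (basin_escape HK f P x2 y r0 r00) => x hx hr.
  exact: (x2_escape HK a b ha hb hab' eab h2 x hx hr).
rewrite /ball_p => hy.
set s := abs (y - x2).
apply: (basin_of_contr HK f P x2 y s (Num.max (abs (2 * a - b) / abs a) (abs b * s))).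
- by rewrite le_max hlam0.
- by rewrite gt_max hlam sr0.
- exact: lexx.
- move=> x hx; exact: (x2_contr HK a b ha hb hab' eab h2 s (sr0 s hy) x hx).
Qed.
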